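(* Let $\lambda\neq0$ and $x$ be fixed, and let \[ F=F(t;x,\lambda)=\frac{2\lambda}{2\lambda+\log(1+\lambda t)}\Bigl(1+\lambda^{-1}\log(1+\lambda t)\Bigr)^{x}, \] considered for $t$ in a neighborhood of $0$ (or as a formal power series in $t$). Then for every integer $N\ge1$, $F$ satisfies the linear differential equation \[ \frac{d^N F}{dt^N}=\lambda^{N}(1+\lambda t)^{-N}\left(\sum_{r=1}^{N}\sum_{i=0}^{r}a^{(\lambda)}_{i,r-i}(N,x)\,\bigl(2\lambda+\log(1+\lambda t)\bigr)^{-i}\bigl(\lambda+\log(1+\lambda t)\bigr)^{-(r-i)}\right)F, \] where, for $1\le r\le N$ and $0\le i\le r$, \[ a^{(\lambda)}_{i,r-i}(N,x)=(-1)^{N+i-r}\, i!\, S_{1,i-1}(r-i)\,(N-1)!\,H_{N-1,r-1}\,(x)_{r-i}. \]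
   Context: $(x)_0=1$ and $(x)_n=x(x-1)\cdots(x-n+1)$ for $n\ge1$. Generalized harmonic numbers: $H_{N,0}=1$ for all integers $N\ge 0$; $H_{N,1}=1+\frac12+\cdots+\frac1N$ for $N\ge1$; and for $2\le j\le N$, $H_{N,j}=\frac{H_{N-1,j-1}}{N}+\frac{H_{N-2,j-1}}{N-1}+\cdots+\frac{H_{j-1,j-1}}{j}$. Generalized Changhee power sums (for $k=1$), for integers $N\ge0$: $S_{1,-1}(N)=1$, $S_{1,0}(N)=N+1$, $S_{1,j}(N)=\sum_{l=0}^{N}S_{1,j-1}(l)$ for $j\ge1$. *)

(* Defs.v *)
From Stdlib Require Import Reals List Factorial.
Import ListNotations.
Open Scope R_scope.

Definition sumR (l : list nat) (f : nat -> R) : R :=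
  fold_right Rplus 0 (map f l).

Fixpoint falling (x : R) (n : nat) : R :=
  match n with
  | O => 1
  | S m => falling x m * (x - INR m)
  end.

(* Generalized harmonic numbers: harm j N = H_{N,j}.
   H_{N,0} = 1, and for j >= 1:  H_{N,j} = sum_{m=j}^{N} H_{m-1,j-1} / m
   (for j = 1 this is 1 + 1/2 + ... + 1/N; for 2 <= j <= N it is the
   paper's recursion; it is 0 for j > N, a case never used). *)
Fixpoint harm (j N : nat) {struct j} : R :=
  match j with
  | O => 1
  | S j' => sumR (seq (S j') (N - j')) (fun m => harm j' (m - 1) / INR m)
  end.

(* Generalized Changhee power sums with index shift:
   S1 j N = S_{1, j-1}(N).  S_{1,-1}(N) = 1, S_{1,j}(N) = sum_{l=0}^N S_{1,j-1}(l)
   (which gives S_{1,0}(N) = N+1). *)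
Fixpoint S1 (j N : nat) {struct j} : nat :=
  match j with
  | O => 1%nat
  | S j' => fold_right Nat.add 0%nat (map (fun l => S1 j' l) (seq 0 (S N)))
  end.

Inductive nth_deriv_on (D : R -> Prop) : nat -> (R -> R) -> (R -> R) -> Prop :=
| nth_deriv_0 (f : R -> R) : nth_deriv_on D 0 f f
| nth_deriv_S (n : nat) (f g h : R -> R) :
    (forall t, D t -> derivable_pt_lim f t (g t)) ->
    nth_deriv_on D n g h -> nth_deriv_on D (S n) f h.

Definition Fgen (lam x t : R) : R :=
  2 * lam / (2 * lam + ln (1 + lam * t)) * Rpower (1 + / lam * ln (1 + lam * t)) x.

Definition acoef (N r i : nat) (x : R) : R :=
  (-1) ^ (N + i - r) * INR (fact i) * INR (S1 i (r - i)) * INR (fact (N - 1))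
  * harm (r - 1) (N - 1) * falling x (r - i).

Definition coefN (lam x : R) (N : nat) (t : R) : R :=
  lam ^ N / (1 + lam * t) ^ N *
  sumR (seq 1 N) (fun r =>
    sumR (seq 0 (S r)) (fun i =>
      acoef N r i x / (2 * lam + ln (1 + lam * t)) ^ i
                    / (lam + ln (1 + lam * t)) ^ (r - i))).

(* Main.v *)
Require Import Defs.
From Stdlib Require Import Reals List.
From Stdlib Require Import Lia Lra Arith.
From Coquelicot Require Import Coquelicot.
Import ListNotations.
Open Scope R_scope.

Lemma sumR_nil f : sumR [] f = 0. Proof. reflexivity. Qed.
Lemma sumR_cons k l f : sumR (k :: l) f = f k + sumR l f. Proof. reflexivity. Qed.
Lemma sumR_app l1 l2 f : sumR (l1 ++ l2) f = sumR l1 f + sumR l2 f.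
Proof. induction l1; [unfold sumR; simpl; ring|]. simpl. rewrite !sumR_cons, IHl1; ring. Qed.
Lemma sumR_ext_in l f g : (forall k, In k l -> f k = g k) -> sumR l f = sumR l g.
Proof. induction l; intros H; [reflexivity|]. rewrite !sumR_cons. rewrite H by (left; auto).
 rewrite IHl; auto. intros; apply H; right; auto. Qed.
Lemma sumR_plus l f g : sumR l (fun k => f k + g k) = sumR l f + sumR l g.
Proof. induction l; [simpl; unfold sumR; simpl; ring|]. rewrite !sumR_cons, IHl; ring. Qed.
Lemma sumR_scal l c f : sumR l (fun k => c * f k) = c * sumR l f.
Proof. induction l; [unfold sumR; simpl; ring|]. rewrite !sumR_cons, IHl; ring. Qed.
Lemma sumR_map l g f : sumR (map g l) f = sumR l (fun k => f (g k)).
Proof. unfold sumR; rewrite map_map; reflexivity. Qed.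
Lemma sumR_shift s n f : sumR (seq (S s) n) f = sumR (seq s n) (fun k => f (S k)).
Proof. rewrite <- seq_shift, sumR_map; reflexivity. Qed.
Lemma sumR_first n f : sumR (seq 0 (S n)) f = f 0%nat + sumR (seq 0 n) (fun k => f (S k)).
Proof. change (seq 0 (S n)) with (0%nat :: seq 1 n). rewrite sumR_cons, sumR_shift; reflexivity. Qed.
Lemma sumR_last s n f : sumR (seq s (S n)) f = sumR (seq s n) f + f (s + n)%nat.
Proof. rewrite seq_S, sumR_app, sumR_cons, sumR_nil; ring. Qed.

Lemma sumR_deriv l (f : nat -> R -> R) f' t :
  (forall k, In k l -> derivable_pt_lim (f k) t (f' k)) ->
  derivable_pt_lim (fun t => sumR l (fun k => f k t)) t (sumR l f').
Proof.
induction l; intros H.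
- apply derivable_pt_lim_const.
- rewrite sumR_cons.
  apply (derivable_pt_lim_ext (fun t => f a t + sumR l (fun k => f k t))).
  { intros; reflexivity. }
  apply derivable_pt_lim_plus. apply H; left; auto. apply IHl; intros; apply H; right; auto.
Qed.

Lemma pow_deriv f t l n : derivable_pt_lim f t l ->
  derivable_pt_lim (fun t => f t ^ n) t (INR n * f t ^ pred n * l).
Proof. intros H. apply (derivable_pt_lim_comp f (fun y => y ^ n)); auto.
 apply derivable_pt_lim_pow. Qed.

Lemma fold_add_app l1 l2 : fold_right Nat.add 0%nat (l1 ++ l2) = (fold_right Nat.add 0 l1 + fold_right Nat.add 0 l2)%nat.
Proof. induction l1; simpl; lia. Qed.
Lemma S1_0 j : S1 0 j = 1%nat. Proof. reflexivity. Qed.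
Lemma S1_n0 k : S1 k 0 = 1%nat.
Proof. induction k; simpl; auto. rewrite IHk; auto. Qed.
Lemma S1_rec k j : S1 (S k) (S j) = (S1 (S k) j + S1 k (S j))%nat.
Proof. cbn [S1]. rewrite (seq_S (S j)), map_app, fold_add_app. simpl. lia. Qed.

Lemma harm_zero k M : (M < k)%nat -> harm k M = 0.
Proof. intros H. destruct k as [|k]; [lia|]. simpl. replace (M - k)%nat with 0%nat by lia. reflexivity. Qed.
Lemma harm_0 M : harm 0 M = 1. Proof. reflexivity. Qed.
Lemma harm_rec k M : harm (S k) (S M) = harm (S k) M + harm k M / INR (S M).
Proof.
destruct (le_lt_dec k M) as [H|H].
- cbn [harm]. replace (S M - k)%nat with (S (M - k)) by lia.
  rewrite sumR_last. replace (S k + (M - k))%nat with (S M) by lia.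
  replace (S M - 1)%nat with M by lia. reflexivity.
- rewrite (harm_zero (S k) (S M)) by lia. rewrite (harm_zero (S k) M) by lia.
  rewrite (harm_zero k M) by lia. unfold Rdiv; ring.
Qed.

Definition wij (x : R) (i j : nat) : R :=
  (-1) ^ j * INR (fact i) * INR (S1 i j) * falling x j.
Definition Wp (x : R) (r : nat) (a b : R) : R :=
  sumR (seq 0 (S r)) (fun i => wij x i (r - i) * a ^ i * b ^ (r - i)).

Lemma W_alg x r a b :
  sumR (seq 0 (S r)) (fun i => wij x i (r-i) * (INR i * a^(S i) * b^(r-i)
        + INR (r-i) * a^i * b^(S (r-i))))
  = Wp x (S r) a b + Wp x r a b * (x*b - a).
Proof.
set (A := fun I => match I with O => 0 | S i => INR (S i) * wij x i (r-i) * a^(S i) * b^(r-i) end).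
set (B := fun i => (INR (r-i) - x) * wij x i (r-i) * a^i * b^(S(r-i))).
set (C := fun I => wij x I (S r - I) * a ^ I * b ^ (S r - I)).
transitivity (sumR (seq 0 (S r)) (fun i => A (S i) + B i)
   + sumR (seq 0 (S r)) (fun i => (x*b - a) * (wij x i (r - i) * a ^ i * b ^ (r - i)))).
{ rewrite <- sumR_plus. apply sumR_ext_in. intros i _. unfold A, B. rewrite S_INR. simpl. ring. }
rewrite sumR_scal. fold (Wp x r a b).
assert (E : sumR (seq 0 (S r)) (fun i => A (S i) + B i) = Wp x (S r) a b).
{ rewrite sumR_plus.
  assert (HA : sumR (seq 0 (S r)) (fun i => A (S i)) = sumR (seq 0 (S r)) A + A (S r)).
  { pose proof (sumR_first (S r) A) as H1. pose proof (sumR_last 0 (S r) A) as H2.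
    change (A 0%nat) with 0 in H1. replace (0 + S r)%nat with (S r) in H2 by lia. lra. }
  rewrite HA. unfold Wp. fold C. rewrite (sumR_last 0 (S r) C). simpl (0 + S r)%nat.
  assert (Htop : A (S r) = C (S r)).
  { unfold A, C. rewrite !Nat.sub_diag. unfold wij. rewrite !S1_n0.
    rewrite (fact_simpl r), mult_INR. simpl. ring. }
  rewrite Htop.
  assert (Hmid : sumR (seq 0 (S r)) A + sumR (seq 0 (S r)) B = sumR (seq 0 (S r)) C).
  { rewrite <- sumR_plus. apply sumR_ext_in. intros i Hi. apply in_seq in Hi.
    assert (Hj : exists j, r = (i + j)%nat) by (exists (r - i)%nat; lia).
    destruct Hj as [j ->]. unfold A, B, C.
    replace (i + j - i)%nat with j by lia. replace (S (i + j) - i)%nat with (S j) by lia.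
    destruct i as [|k].
    - unfold wij. rewrite !S1_0. cbn [falling fact pow]. simpl INR. ring.
    - replace (S k + j - k)%nat with (S j) by lia.
      unfold wij. rewrite S1_rec, plus_INR. rewrite (fact_simpl k), mult_INR.
      cbn [falling pow]. rewrite S_INR. ring. }
  lra. }
rewrite E. ring.
Qed.

Definition Pf lam t := lam / (1 + lam * t).
Definition af lam t := / (2 * lam + ln (1 + lam * t)).
Definition bf lam t := / (lam + ln (1 + lam * t)).
Definition good lam t := 0 < 1 + lam * t /\ 2 * lam + ln (1 + lam * t) <> 0 /\
   lam + ln (1 + lam * t) <> 0 /\ 0 < 1 + / lam * ln (1 + lam * t).
Definition Wt lam x r t := Wp x r (af lam t) (bf lam t).
Definition Kf lam x N t := sumR (seq 0 N) (fun s => harm s (N - 1) * Wt lam x (S s) t).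

Lemma D_val f t l l' : derivable_pt_lim f t l -> l = l' -> derivable_pt_lim f t l'.
Proof. intros H ->; auto. Qed.
Lemma D_mult f g t lf lg : derivable_pt_lim f t lf -> derivable_pt_lim g t lg ->
  derivable_pt_lim (fun t => f t * g t) t (lf * g t + f t * lg).
Proof. intros H1 H2. exact (derivable_pt_lim_mult f g t lf lg H1 H2). Qed.
Lemma D_const c t : derivable_pt_lim (fun _ => c) t 0.
Proof. apply derivable_pt_lim_const. Qed.

Section S.
Variables lam x : R.
Hypothesis Hlam : lam <> 0.

Lemma dP t : good lam t -> derivable_pt_lim (Pf lam) t (- (Pf lam t) ^ 2).
Proof. intros [H1 [HA [HB HC]]]. apply is_derive_Reals. unfold Pf. auto_derive.
 - lra.
 - field. lra. Qed.
Lemma da t : good lam t -> derivable_pt_lim (af lam) t (- Pf lam t * af lam t ^ 2).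
Proof. intros [H1 [HA [HB HC]]]. apply is_derive_Reals. unfold Pf, af. auto_derive.
 - repeat split; auto.
 - field. split; auto; lra. Qed.
Lemma db t : good lam t -> derivable_pt_lim (bf lam) t (- Pf lam t * bf lam t ^ 2).
Proof. intros [H1 [HA [HB HC]]]. apply is_derive_Reals. unfold Pf, bf. auto_derive.
 - repeat split; auto.
 - field. split; auto; lra. Qed.
Lemma dF t : good lam t ->
 derivable_pt_lim (Fgen lam x) t (Pf lam t * (x * bf lam t - af lam t) * Fgen lam x t).
Proof.
intros [H1 [HA [HB HC]]].
apply is_derive_Reals. unfold Fgen, Rpower, Pf, af, bf. auto_derive.
- repeat split; auto.
- field. repeat split; auto; lra.
Qed.

Lemma pred_pow n y : INR n * y ^ pred n * y ^ 2 = INR n * y ^ S n.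
Proof. destruct n; simpl; ring. Qed.

Lemma W_deriv r t : good lam t ->
  derivable_pt_lim (Wt lam x r) t
    (Pf lam t * (- Wt lam x (S r) t - Wt lam x r t * (x * bf lam t - af lam t))).
Proof.
intros G. unfold Wt. unfold Wp at 1.
eapply D_val.
{ apply (sumR_deriv (seq 0 (S r)) (fun i t => wij x i (r - i) * af lam t ^ i * bf lam t ^ (r - i))).
  intros i _. apply D_mult. apply D_mult. apply D_const. apply pow_deriv, da, G.
  apply pow_deriv, db, G. }
set (a := af lam t). set (b := bf lam t). set (P := Pf lam t).
replace (P * (- Wp x (S r) a b - Wp x r a b * (x * b - a))) with (- P * (Wp x (S r) a b + Wp x r a b * (x * b - a))) by ring.
rewrite <- (W_alg x r a b). rewrite <- sumR_scal.
apply sumR_ext_in. intros i _.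
transitivity (- P * (wij x i (r - i) * ((INR i * a ^ pred i * a^2) * b ^ (r - i) +
    INR (r - i) * a ^ i * (b ^ pred (r - i) * b ^ 2)))).
{ change (af lam t) with a; change (bf lam t) with b; ring. }
rewrite pred_pow. replace (INR (r - i) * a ^ i * (b ^ pred (r - i) * b ^ 2)) with
  (a ^ i * (INR (r - i) * b ^ pred (r - i) * b ^ 2)) by ring. rewrite pred_pow. ring.
Qed.

Lemma sum_lin l (h X Y : nat -> R) P q :
  sumR l (fun s => h s * (P * (- X s - Y s * q))) =
  P * (- sumR l (fun s => h s * X s) - sumR l (fun s => h s * Y s) * q).
Proof. induction l; [unfold sumR; simpl; ring|]. rewrite !sumR_cons, IHl. ring. Qed.

Lemma K_deriv N t : good lam t ->
  derivable_pt_lim (Kf lam x N) t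
   (Pf lam t * (- sumR (seq 0 N) (fun s => harm s (N - 1) * Wt lam x (S (S s)) t)
                - Kf lam x N t * (x * bf lam t - af lam t))).
Proof.
intros G. unfold Kf.
eapply D_val.
{ apply (sumR_deriv (seq 0 N) (fun s t => harm s (N - 1) * Wt lam x (S s) t)).
  intros s _. apply D_mult. apply D_const. apply W_deriv, G. }
rewrite <- sum_lin. apply sumR_ext_in. intros; ring.
Qed.

Lemma K_rec M t : Kf lam x (S (S M)) t =
  Kf lam x (S M) t + / INR (S M) * sumR (seq 0 (S M)) (fun s => harm s M * Wt lam x (S (S s)) t).
Proof.
unfold Kf. replace (S (S M) - 1)%nat with (S M) by lia. replace (S M - 1)%nat with M by lia.
rewrite sumR_first. rewrite harm_0.
rewrite (sumR_ext_in _ _ (fun k => harm (S k) M * Wt lam x (S (S k)) t + / INR (S M) * (harm k M * Wt lam x (S (S k)) t))).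
2:{ intros k _. rewrite harm_rec. unfold Rdiv. ring. }
rewrite sumR_plus, sumR_scal.
pose proof (sumR_first (S M) (fun s => harm s M * Wt lam x (S s) t)) as E1.
pose proof (sumR_last 0 (S M) (fun s => harm s M * Wt lam x (S s) t)) as E2.
cbv beta in E1, E2. replace (0 + S M)%nat with (S M) in E2 by lia. rewrite harm_zero in E2 by lia. rewrite harm_0 in E1.
lra.
Qed.

Lemma m1sq j : (-1) ^ j * (-1) ^ j = 1.
Proof. rewrite <- Rpow_mult_distr. replace (-1 * -1) with 1 by ring. apply pow1. Qed.

Lemma coefN_repr M t : coefN lam x (S M) t =
  (-1) ^ (S M) * INR (fact M) * Pf lam t ^ (S M) * Kf lam x (S M) t.
Proof.
unfold coefN, Kf, Pf. replace (S M - 1)%nat with M by lia.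
unfold Rdiv at 1. rewrite <- pow_inv, <- Rpow_mult_distr.
rewrite sumR_shift.
transitivity ((lam * / (1 + lam * t)) ^ S M * ((-1) ^ (S M) * INR (fact M) *
   sumR (seq 0 (S M)) (fun s => harm s M * Wt lam x (S s) t))); [|unfold Rdiv; ring].
f_equal. rewrite <- sumR_scal. apply sumR_ext_in. intros s Hs. apply in_seq in Hs.
unfold Wt, Wp. rewrite <- sumR_scal, <- sumR_scal. apply sumR_ext_in. intros i Hi. apply in_seq in Hi.
assert (Hj : exists j, S s = (i + j)%nat) by (exists (S s - i)%nat; lia).
destruct Hj as [j Hj]. rewrite Hj.
replace (i + j - i)%nat with j by lia.
unfold acoef, wij.
replace (S M + i - (i + j))%nat with (S M - j)%nat by lia.
replace (i + j - 1)%nat with s by lia. replace (S M - 1)%nat with M by lia.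
replace (i + j - i)%nat with j by lia.
assert (Hp : (-1) ^ (S M) = (-1) ^ (S M - j) * (-1) ^ j) by (rewrite <- pow_add; f_equal; lia).
rewrite Hp. unfold af, bf; rewrite !pow_inv. unfold Rdiv.
set (e := (-1) ^ j). pose proof (m1sq j) as He. fold e in He.
transitivity ((-1) ^ (S M - j) * INR (fact i) * INR (S1 i j) * INR (fact M) * harm s M *
   falling x j * / (2 * lam + ln (1 + lam * t)) ^ i * / (lam + ln (1 + lam * t)) ^ j * (e * e)).
{ rewrite He; ring. }
ring.
Qed.

Lemma step M t : good lam t ->
  derivable_pt_lim (fun t => coefN lam x (S M) t * Fgen lam x t) t
    (coefN lam x (S (S M)) t * Fgen lam x t).
Proof.
intros G.
apply (derivable_pt_lim_ext (fun t => ((-1) ^ (S M) * INR (fact M) * Pf lam t ^ (S M)) * Kf lam x (S M) t * Fgen lam x t)).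
{ intros z. rewrite coefN_repr. ring. }
eapply D_val.
{ apply D_mult. apply D_mult. apply D_mult. apply D_const. apply pow_deriv, dP, G.
  apply K_deriv, G. apply dF, G. }
rewrite coefN_repr, K_rec.
replace (S (S M) - 1)%nat with (S M) by lia.
replace (S M - 1)%nat with M by lia.
rewrite (fact_simpl M), mult_INR.
set (P := Pf lam t). set (F := Fgen lam x t). set (K := Kf lam x (S M) t).
set (Sg := sumR (seq 0 (S M)) (fun s => harm s M * Wt lam x (S (S s)) t)).
simpl pred. cbn [pow].
assert (INR (S M) <> 0) by (apply not_0_INR; lia).
field. auto.
Qed.

End S.

Lemma domain lam (Hlam : lam <> 0) : exists delta, 0 < delta /\ forall t, Rabs t < delta -> good lam t.
Proof.
set (c := Rabs lam / 2).
assert (Hc : 0 < c) by (unfold c; pose proof (Rabs_pos_lt lam Hlam); lra).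
assert (E1 : exp (- c) < 1) by (rewrite <- exp_0; apply exp_increasing; lra).
assert (E2 : 1 < exp c) by (rewrite <- exp_0; apply exp_increasing; lra).
assert (E0 : 0 < exp (- c)) by apply exp_pos.
set (m := Rmin (1 - exp (- c)) (exp c - 1)).
assert (Hm : 0 < m) by (unfold m; apply Rmin_pos; lra).
assert (Hm1 : m <= 1 - exp (-c)) by apply Rmin_l.
assert (Hm2 : m <= exp c - 1) by apply Rmin_r.
assert (Hal : 0 < Rabs lam) by (apply Rabs_pos_lt; auto).
exists (m / Rabs lam). split. { apply Rdiv_lt_0_compat; auto. }
intros t Ht.
assert (Hlt : Rabs (lam * t) < m).
{ rewrite Rabs_mult. apply (Rmult_lt_compat_l (Rabs lam)) in Ht; auto.
  replace (Rabs lam * (m / Rabs lam)) with m in Ht by (field; lra). lra. }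
apply Rabs_def2 in Hlt. destruct Hlt as [Hl1 Hl2].
assert (Hpos : 0 < 1 + lam * t) by lra.
assert (U1 : ln (1 + lam * t) < c).
{ rewrite <- (ln_exp c). apply ln_increasing; lra. }
assert (U2 : - c < ln (1 + lam * t)).
{ rewrite <- (ln_exp (- c)). apply ln_increasing; lra. }
set (u := ln (1 + lam * t)) in *.
unfold good. fold u.
unfold c in U1, U2.
destruct (Rlt_or_le 0 lam) as [Hp|Hn].
- rewrite Rabs_pos_eq in U1, U2 by lra.
  split; [lra|]. split; [lra|]. split; [lra|].
  replace (1 + / lam * u) with ((lam + u) * / lam) by (field; lra).
  apply Rmult_lt_0_compat; [lra|]. apply Rinv_0_lt_compat; lra.
- rewrite Rabs_left1 in U1, U2 by lra.
  assert (lam < 0) by lra.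
  split; [lra|]. split; [lra|]. split; [lra|].
  replace (1 + / lam * u) with ((- (lam + u)) * / (- lam)) by (field; lra).
  apply Rmult_lt_0_compat; [lra|]. apply Rinv_0_lt_compat; lra.
Qed.

Theorem theorem3 (lam x : R) (Hlam : lam <> 0) :
  exists delta : R, 0 < delta /\
    forall N : nat, (1 <= N)%nat ->
      nth_deriv_on (fun t => Rabs t < delta) N (Fgen lam x)
        (fun t => coefN lam x N t * Fgen lam x t).
Proof.
destruct (domain lam Hlam) as [delta [Hd Hg]].
exists delta. split; auto.
assert (Chain : forall k M, nth_deriv_on (fun t => Rabs t < delta) k
   (fun t => coefN lam x (S M) t * Fgen lam x t) (fun t => coefN lam x (S M + k) t * Fgen lam x t)).
{ induction k; intros M.
  - rewrite Nat.add_0_r. constructor.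
  - apply nth_deriv_S with (g := fun t => coefN lam x (S (S M)) t * Fgen lam x t).
    + intros t Ht. apply step; auto.
    + replace (S M + S k)%nat with (S (S M) + k)%nat by lia. apply IHk. }
intros N HN. destruct N as [|k]; [lia|].
apply nth_deriv_S with (g := fun t => coefN lam x 1 t * Fgen lam x t).
- intros t Ht. eapply D_val. apply dF; auto.
  rewrite coefN_repr. unfold Kf, Wt, Wp, wij, sumR. simpl. ring.
- apply (Chain k 0%nat).
Qed.
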